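(* The operator $\mathbf{V}\mapsto\mathbf{V}^{\mathsf{bar}}$ on the lattice of pseudovarieties of finite semigroups preserves the property of being join irreducible. In particular, if $\llbracket S\rrbracket$ is join irreducible for a finite semigroup $S$, then $\llbracket S^{\mathsf{bar}}\rrbracket$ is join irreducible. Further, if $\operatorname{Excl}(S)=\llbracket \mathbf{u}\approx\mathbf{v}\rrbracket$ where $\mathbf{u},\mathbf{v}\in\widehat{A^+}$, then \[\operatorname{Excl}(S^{\mathsf{bar}})=\llbracket(\mathbf{e}z\mathbf{u})^{\omega}\approx(\mathbf{e}z\mathbf{v})^{\omega}\rrbracket,\] where $z\notin A$ and $\mathbf{e}$ is an idempotent in the minimal ideal of $\widehat{(A\cup\{z\})^+}$.
   Context: All semigroups are finite. A pseudovariety is a class of finite semigroups closed under finite direct products, subsemigroups and homomorphic images; $\llbracket S\rrbracket$ (resp. $\llbracket\mathscr{K}\rrbracket$) is the pseudovariety generated by $S$ (resp. a class $\mathscr{K}$), and $\llbracket\Sigma\rrbracket$ is the pseudovariety defined by a set $\Sigma$ of pseudoidentities. $\widehat{A^+}$ is the free profinite semigroup on $A$, and $\mathbf{x}^\omega$ denotes the idempotent power. A pseudovariety $\mathbf{V}$ is join irreducible if for every set $\mathscr{X}$ of pseudovarieties, $\mathbf{V}\subseteq\bigvee\mathscr{X}$ implies $\mathbf{V}\subseteq\mathbf{X}$ for some $\mathbf{X}\in\mathscr{X}$. $\operatorname{Excl}(S)$ is the class of finite semigroups $T$ with $S\notin\llbracket T\rrbracket$. For a semigroup $S$, $S^\bullet=S$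 if $S$ is a monoid and $S^\bullet=S^I$ ($S$ with an external identity adjoined) otherwise; $S$ acts faithfully on the right of $S^\bullet$ by right multiplication, and $S^{\mathsf{bar}}$ is the semigroup of transformations of $S^\bullet$ (acting on the right, composed left to right) consisting of these right multiplications together with all constant maps on $S^\bullet$. For a pseudovariety $\mathbf{V}$, $\mathbf{V}^{\mathsf{bar}}=\llbracket S^{\mathsf{bar}}\mid S\in\mathbf{V}\rrbracket$. *)

(* Defs.v *)
From mathcomp Require Import all_boot.
Set Implicit Arguments. Unset Strict Implicit. Unset Printing Implicit Defensive.

Record finSemigroup := FinSemigroup {
  fs_car :> finType;
  fs_mul : fs_car -> fs_car -> fs_car;
  fs_assoc : associative fs_mul;
  fs_ne : inhabited fs_car }.
Arguments fs_mul {f}.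

Definition hom (S T : finSemigroup) (f : S -> T) :=
  forall x y : S, f (fs_mul x y) = fs_mul (f x) (f y).

Definition sgClass := finSemigroup -> Prop.

(* direct products: trivial semigroup (empty product) and binary products *)
Definition triv_sg : finSemigroup :=
  @FinSemigroup unit (fun _ _ => tt) (fun _ _ _ => erefl) (inhabits tt).

Section Prod.
Variables S T : finSemigroup.
Definition prod_mul (x y : (S * T)%type) : (S * T)%type :=
  (fs_mul x.1 y.1, fs_mul x.2 y.2).
Lemma prod_mulA : associative prod_mul.
Proof. by move=> [a b] [c d] [e f]; rewrite /prod_mul /= !fs_assoc. Qed.
Lemma prod_ne : inhabited (S * T)%type.
Proof. by case: (fs_ne S) => s; case: (fs_ne T) => t; constructor; exact: (s, t). Qed.
Definition prod_sg : finSemigroup := FinSemigroup prod_mulA prod_ne.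
End Prod.

(* a pseudovariety: closed under homomorphic images, subsemigroups
   (injective homomorphisms, hence also isomorphic copies) and finite
   direct products *)
Definition pseudovariety (V : sgClass) : Prop :=
  [/\ (forall (S T : finSemigroup) (f : S -> T),
         hom f -> (forall y, exists x, f x = y) -> V S -> V T),
      (forall (S T : finSemigroup) (f : T -> S),
         hom f -> injective f -> V S -> V T),
      V triv_sg &
      (forall S T, V S -> V T -> V (prod_sg S T))].

Definition gen (K : sgClass) : sgClass :=
  fun T => forall V, pseudovariety V -> (forall S, K S -> V S) -> V T.

Definition subclass (V W : sgClass) := forall S, V S -> W S.

Definition join (XX : sgClass -> Prop) : sgClass :=
  gen (fun T => exists2 X, XX X & X T).

Definition join_irreducible (V : sgClass) : Prop :=
  forall XX : sgClass -> Prop, (forall X, XX X -> pseudovariety X) ->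
    subclass V (join XX) -> exists2 X, XX X & subclass V X.

Definition iso (S T : finSemigroup) :=
  exists f : S -> T, hom f /\ bijective f.
Definition pv_of (S : finSemigroup) : sgClass := gen (iso S).

Definition Excl (S : finSemigroup) : sgClass := fun T => ~ pv_of T S.

Section Bar.
Variable S : finSemigroup.

Definition is_monoid : bool :=
  [exists e : S, [forall x : S, (fs_mul e x == x) && (fs_mul x e == x)]].

(* S^bullet : S if S is a monoid, S^I = option S (None = I) otherwise *)
Definition Sdot_b (b : bool) : finType := if b then fs_car S else option S.
Definition Sdot : finType := Sdot_b is_monoid.

Definition act_b (b : bool) : Sdot_b b -> S -> Sdot_b b :=
  match b as b0 return Sdot_b b0 -> S -> Sdot_b b0 with
  | true => fun a s => fs_mul a s
  | false => fun a s => Some (match a with Some a' => fs_mul a' s | None => s end)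
  end.
Lemma act_bA (b : bool) (a : Sdot_b b) (s t : S) : act_b (act_b a s) t = act_b a (fs_mul s t).
Proof. by case: b a => [a|[a|]] /=; rewrite ?fs_assoc. Qed.

Definition act : Sdot -> S -> Sdot := @act_b is_monoid.

(* transformations act on the right, composed left to right *)
Definition rmult (s : S) : {ffun Sdot -> Sdot} := [ffun a => act a s].
Definition cst (a : Sdot) : {ffun Sdot -> Sdot} := [ffun _ => a].
Definition tcomp (f g : {ffun Sdot -> Sdot}) : {ffun Sdot -> Sdot} :=
  [ffun x => g (f x)].

Definition in_bar (f : {ffun Sdot -> Sdot}) : bool :=
  [exists s : S, f == rmult s] || [exists a : Sdot, f == cst a].

Lemma in_bar_comp f g : in_bar f -> in_bar g -> in_bar (tcomp f g).
Proof.
case/orP=> [/existsP[s /eqP->]|/existsP[a /eqP->]];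
case/orP=> [/existsP[t /eqP->]|/existsP[b /eqP->]].
- apply/orP; left; apply/existsP; exists (fs_mul s t); apply/eqP/ffunP=> x.
  by rewrite !ffunE /act act_bA.
- by apply/orP; right; apply/existsP; exists b; apply/eqP/ffunP=> x; rewrite !ffunE.
- apply/orP; right; apply/existsP; exists (act a t); apply/eqP/ffunP=> x.
  by rewrite !ffunE.
- by apply/orP; right; apply/existsP; exists b; apply/eqP/ffunP=> x; rewrite !ffunE.
Qed.

Definition bar_car : finType := {f : {ffun Sdot -> Sdot} | in_bar f}.
Definition bar_mul (x y : bar_car) : bar_car :=
  exist _ (tcomp (val x) (val y)) (in_bar_comp (valP x) (valP y)).
Lemma bar_mulA : associative bar_mul.
Proof. by move=> x y z; apply: val_inj; apply/ffunP=> a; rewrite /= !ffunE. Qed.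
Lemma bar_ne : inhabited bar_car.
Proof.
case: (fs_ne S) => s; constructor.
exists (rmult s); apply/orP; left; apply/existsP; exists s; exact: eqxx.
Qed.
Definition bar : finSemigroup := FinSemigroup bar_mulA bar_ne.
End Bar.

Definition bar_pv (V : sgClass) : sgClass :=
  gen (fun T => exists2 S, V S & iso (bar S) T).

(* ---------- implicit operations = elements of the free profinite
   semigroup on a finite alphabet A ---------- *)
Definition rawop (A : finType) := forall T : finSemigroup, (A -> T) -> T.
Definition natural (A : finType) (u : rawop A) :=
  forall (T T' : finSemigroup) (phi : T -> T'), hom phi ->
    forall f : A -> T, phi (u T f) = u T' (fun a => phi (f a)).
Record implop (A : finType) := ImplOp { io : rawop A; io_nat : natural io }.
Arguments io {A} i T f.

Definition rmul (A : finType) (u v : rawop A) : rawop A :=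
  fun T f => fs_mul (u T f) (v T f).

(* power x^(n+1) and the idempotent power x^omega = x^(|T|!) *)
Definition powS (T : finSemigroup) (x : T) (n : nat) : T :=
  iter n (fun y => fs_mul y x) x.
Definition omega (T : finSemigroup) (x : T) : T := powS x (#|T| `!).-1.
Definition romega (A : finType) (u : rawop A) : rawop A :=
  fun T f => omega (u T f).

Definition req (A : finType) (u v : rawop A) := forall T f, u T f = v T f.

(* multiplication in the monoid S^1 (None = empty factor) *)
Definition omul_l (A : finType) (x : option (implop A)) (w : rawop A) : rawop A :=
  match x with Some x => rmul (io x) w | None => w end.
Definition omul_r (A : finType) (w : rawop A) (y : option (implop A)) : rawop A :=
  match y with Some y => rmul w (io y) | None => w end.

Definition idem_implop (A : finType) (e : implop A) := req (rmul (io e) (io e)) (io e).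
(* e lies in the minimal ideal: e belongs to every principal ideal S^1 w S^1 *)
Definition in_minimal_ideal (A : finType) (e : implop A) :=
  forall w : implop A, exists x y : option (implop A),
    req (io e) (omul_r (omul_l x (io w)) y).

Definition sat (A : finType) (u v : rawop A) : sgClass :=
  fun T => forall f : A -> T, u T f = v T f.

(* the term (e z u)^omega over the alphabet A + {z}, with z = None *)
Definition ezu_omega (A : finType) (e : implop (option A)) (u : implop A)
  : rawop (option A) :=
  fun T f => omega (fs_mul (fs_mul (io e T f) (f None)) (io u T (fun a => f (Some a)))).

(* Main.v *)
Require Import Defs.
From mathcomp Require Import all_boot zify.
From Stdlib Require Import Classical ClassicalDescription FunctionalExtensionality.
Set Implicit Arguments. Unset Strict Implicit. Unset Printing Implicit Defensive.

Local Notation "x ⋆ y" := (fs_mul x y) (at level 40, left associativity).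

Section Sub.
Variables (T : finSemigroup) (P : pred T).
Hypothesis PM : forall x y, P x -> P y -> P (x ⋆ y).
Hypothesis Pne : exists x, P x.
Definition sub_car : finType := {x : T | P x}.
Definition sub_mul (x y : sub_car) : sub_car :=
  exist _ (val x ⋆ val y) (PM (valP x) (valP y)).
Lemma sub_mulA : associative sub_mul.
Proof. by move=> x y z; apply: val_inj; rewrite /= fs_assoc. Qed.
Lemma sub_ne : inhabited sub_car.
Proof. by case: Pne => x Px; constructor; exact: (exist _ x Px). Qed.
Definition sub_sg : finSemigroup := FinSemigroup sub_mulA sub_ne.
Lemma sub_incl_hom : hom (fun x : sub_sg => val x).
Proof. by []. Qed.
End Sub.

Definition phom (S T : finSemigroup) (F : S -> option T) :=
  forall x y a b, F x = Some a -> F y = Some b -> F (x ⋆ y) = Some (a ⋆ b).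
Definition divides (T S : finSemigroup) :=
  exists F : S -> option T, phom F /\ forall b, exists a, F a = Some b.

Lemma pv_div (V : sgClass) (S T : finSemigroup) :
  pseudovariety V -> V S -> divides T S -> V T.
Proof.
case=> Vh Vs _ _ VS [F [hF sF]].
case: (fs_ne T) => t0.
pose P := fun x => F x != None.
have PM : forall x y, P x -> P y -> P (x ⋆ y).
  rewrite /P => x y; case ex: (F x) => [a|] // _; case ey: (F y) => [b|] // _.
  by rewrite (hF _ _ _ _ ex ey).
have Pne : exists x, P x by case: (sF t0) => a ea; exists a; rewrite /P ea.
have VZ : V (sub_sg PM Pne).
  apply: (Vs S (sub_sg PM Pne) (fun x : sub_sg PM Pne => val x)) => //; exact: val_inj.
pose g := fun z : sub_sg PM Pne => odflt t0 (F (val z)).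
apply: (Vh _ _ g) VZ.
  move=> x y; rewrite /g /=.
  case ex: (F (val x)) => [a|]; last by move: (valP x); rewrite /P ex.
  case ey: (F (val y)) => [b|]; last by move: (valP y); rewrite /P ey.
  by rewrite (hF _ _ _ _ ex ey).
move=> y; case: (sF y) => a ea.
have Pa : P a by rewrite /P ea.
by exists (exist _ a Pa); rewrite /g /= ea.
Qed.

Lemma divides_refl S : divides S S.
Proof. by exists Some; split; [move=> x y a b [<-] [<-] | move=> b; exists b]. Qed.

Lemma divides_trans A B C : divides A B -> divides B C -> divides A C.
Proof.
case=> [F2 [h2 s2]] [F1 [h1 s1]].
exists (fun c => obind F2 (F1 c)); split.
  move=> x y a b; case e1: (F1 x) => [x'|] //= ea; case e2: (F1 y) => [y'|] //= eb.
  by rewrite (h1 _ _ _ _ e1 e2) /= (h2 _ _ _ _ ea eb).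
move=> a; case: (s2 a) => b eb; case: (s1 b) => c ec; exists c; by rewrite ec.
Qed.

Lemma hom_divides (S T : finSemigroup) (f : S -> T) :
  hom f -> (forall y, exists x, f x = y) -> divides T S.
Proof.
move=> hf sf; exists (fun x => Some (f x)); split.
  by move=> x y a b [<-] [<-]; rewrite hf.
by move=> b; case: (sf b) => a <-; exists a.
Qed.

Lemma inj_divides (S T : finSemigroup) (f : T -> S) :
  hom f -> injective f -> divides T S.
Proof.
move=> hf inf; exists (fun s => [pick t | f t == s]); split.
  move=> x y a b; case: pickP => // a' /eqP fa [ea]; subst a'.
  case: pickP => // b' /eqP fb [eb]; subst b'.
  case: pickP => [c /eqP fc|/(_ (a ⋆ b))]; last by rewrite hf fa fb eqxx.
  by congr Some; apply: inf; rewrite fc hf fa fb.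
move=> b; exists (f b); case: pickP => [c /eqP/inf -> //|/(_ b)].
by rewrite eqxx.
Qed.

Lemma iso_divides A B : iso A B -> divides B A.
Proof.
case=> f [hf [g fg gf]]; apply: (hom_divides hf) => y; exists (g y); exact: gf.
Qed.

Lemma pv_iso (V : sgClass) A B : pseudovariety V -> V A -> iso A B -> V B.
Proof. by move=> pV VA /iso_divides; apply: pv_div. Qed.

Lemma iso_refl A : iso A A.
Proof. by exists id; split => //; exists id. Qed.

Lemma divides_prod A1 A2 B1 B2 :
  divides A1 B1 -> divides A2 B2 -> divides (prod_sg A1 A2) (prod_sg B1 B2).
Proof.
case=> [F1 [h1 s1]] [F2 [h2 s2]].
exists (fun x : prod_sg B1 B2 =>
  match F1 x.1, F2 x.2 with Some a, Some b => Some ((a, b) : prod_sg A1 A2) | _, _ => None end).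
split.
  move=> [x1 x2] [y1 y2] [a1 a2] [b1 b2] /=.
  case e1: (F1 x1) => [c1|] //; case e2: (F2 x2) => [c2|] // [<- <-].
  case e3: (F1 y1) => [d1|] //; case e4: (F2 y2) => [d2|] // [<- <-].
  by rewrite (h1 _ _ _ _ e1 e3) (h2 _ _ _ _ e2 e4).
move=> [b1 b2]; case: (s1 b1) => a1 e1; case: (s2 b2) => a2 e2.
by exists ((a1, a2) : prod_sg B1 B2); rewrite /= e1 e2.
Qed.

Lemma gen_pv K : pseudovariety (gen K).
Proof.
split.
- move=> S T f hf sf GS V pV KV; case: (pV) => Vh _ _ _; exact: (Vh _ _ f hf sf (GS V pV KV)).
- move=> S T f hf inf GS V pV KV; case: (pV) => _ Vs _ _; exact: (Vs _ _ f hf inf (GS V pV KV)).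
- by move=> V [_ _ Vt _].
- move=> S T GS GT V pV KV; case: (pV) => _ _ _ Vp; exact: Vp (GS V pV KV) (GT V pV KV).
Qed.

Lemma gen_in (K : sgClass) S : K S -> gen K S.
Proof. by move=> KS V _ KV; apply: KV. Qed.

Lemma gen_min (K V : sgClass) : pseudovariety V -> (forall S, K S -> V S) ->
  forall S, gen K S -> V S.
Proof. by move=> pV KV S GS; apply: GS. Qed.

Inductive ProdK (K : sgClass) : finSemigroup -> Prop :=
| PK0 : ProdK K triv_sg
| PKc S P : K S -> ProdK K P -> ProdK K (prod_sg S P).

Definition DK (K : sgClass) : sgClass :=
  fun T => exists2 P, ProdK K P & divides T P.

Lemma ProdK_prod K P1 P2 : ProdK K P1 -> ProdK K P2 ->
  exists2 P, ProdK K P & divides (prod_sg P1 P2) P.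
Proof.
move=> h1; elim: h1 P2 => [|S P KS _ IH] P2 h2.
  exists P2 => //; exists (fun p : P2 => Some ((tt, p) : prod_sg triv_sg P2)); split.
    by move=> x y a b [<-] [<-].
  by move=> [[] p]; exists p.
case: (IH _ h2) => P' hP' dP'.
exists (prod_sg S P'); first exact: PKc.
apply: divides_trans (divides_prod (divides_refl S) dP').
exists (fun x : prod_sg S (prod_sg P P2) =>
   Some (((x.1, x.2.1), x.2.2) : prod_sg (prod_sg S P) P2)); split.
  by move=> [x1 [x2 x3]] [y1 [y2 y3]] a b [<-] [<-].
by move=> [[b1 b2] b3]; exists (b1, (b2, b3)).
Qed.

Lemma DK_pv K : pseudovariety (DK K).
Proof.
split.
- move=> S T f hf sf [P hP dP]; exists P => //.
  exact: divides_trans (hom_divides hf sf) dP.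
- move=> S T f hf inf [P hP dP]; exists P => //.
  exact: divides_trans (inj_divides hf inf) dP.
- by exists triv_sg; [exact: PK0 | exact: divides_refl].
- move=> S T [P1 h1 d1] [P2 h2 d2].
  case: (ProdK_prod h1 h2) => P hP dP; exists P => //.
  exact: divides_trans (divides_prod d1 d2) dP.
Qed.

Lemma gen_DK K T : gen K T -> DK K T.
Proof.
apply: gen_min; first exact: DK_pv.
move=> S KS; exists (prod_sg S triv_sg); first by apply: PKc => //; exact: PK0.
by apply: (hom_divides (f := fun x : prod_sg S triv_sg => x.1)) => // y; exists (y, tt).
Qed.

Lemma ProdK_sep K P : ProdK K P -> forall x y : P, x <> y ->
  exists (T : finSemigroup) (h : P -> T), [/\ hom h, K T & h x <> h y].
Proof.
elim=> [|S P' KS _ IH] x y.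
  by case: x; case: y.
case: x y => [x1 x2] [y1 y2] ne.
case: (eqVneq x1 y1) => [e1|n1].
  have n2 : x2 <> y2 by move=> e2; apply: ne; rewrite e1 e2.
  case: (IH _ _ n2) => T [h [hh KT nh]].
  by exists T, (fun p : prod_sg S P' => h p.2); split => // a b; apply: hh.
by exists S, (fun p : prod_sg S P' => p.1); split => //; apply/eqP.
Qed.

Lemma sep_pv (V : sgClass) (D S : finSemigroup) (phi : D -> S) :
  pseudovariety V -> hom phi -> (forall s, exists d, phi d = s) ->
  (forall d d', phi d <> phi d' -> exists (W : finSemigroup) (k : D -> W), [/\ hom k, V W & k d <> k d']) ->
  V S.
Proof.
move=> pV hphi sphi sep.
have comb : forall l : seq (D * D), exists (W : finSemigroup) (k : D -> W), [/\ hom k, V W &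
   forall p, p \in l -> phi p.1 <> phi p.2 -> k p.1 <> k p.2].
  elim=> [|p l [W [k [hk VW kl]]]].
    exists triv_sg, (fun _ => tt); split => //; by case: pV.
  case: (classic (phi p.1 = phi p.2)) => [E|NE].
    exists W, k; split => // q; rewrite inE => /orP [/eqP -> //|]; exact: kl.
  case: (sep _ _ NE) => W' [k' [hk' VW' nk']].
  exists (prod_sg W W'), (fun d => (k d, k' d)); split.
  - by move=> a b; rewrite hk hk'.
  - by case: pV => _ _ _ Vp; apply: Vp.
  move=> q; rewrite inE => /orP [/eqP -> _ [] _ //|ql nq [] /(kl _ ql nq) //].
case: (comb (enum (@predT (D * D)%type))) => W [k [hk VW kl]].
have kl' : forall d d', k d = k d' -> phi d = phi d'.
  move=> d d' e; apply: NNPP => ne; apply: (kl (d, d')) => //; by rewrite mem_enum.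
apply: (pv_div pV VW).
exists (fun w => omap phi [pick d | k d == w]); split.
  move=> x y a b; case: pickP => // d /eqP kd [<-]; case: pickP => // d' /eqP kd' [<-].
  case: pickP => [d'' /eqP kd''|/(_ (d ⋆ d'))]; last by rewrite hk kd kd' eqxx.
  by congr Some; rewrite -hphi; apply: kl'; rewrite kd'' hk kd kd'.
move=> s; case: (sphi s) => d <-; exists (k d).
case: pickP => [d' /eqP /kl' e|/(_ d)]; [by rewrite /= e | by rewrite eqxx].
Qed.

Section Pow.
Variable T : finSemigroup.
Implicit Types x y : T.

Lemma powS0 x : powS x 0 = x. Proof. by []. Qed.
Lemma powSS x n : powS x n.+1 = powS x n ⋆ x. Proof. by []. Qed.

Lemma powS_add x m n : powS x (m + n).+1 = powS x m ⋆ powS x n.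
Proof.
elim: n => [|n IH]; first by rewrite addn0.
by rewrite addnS powSS IH powSS fs_assoc.
Qed.

Lemma powSl x n : powS x n.+1 = x ⋆ powS x n.
Proof. by rewrite -(add0n n) powS_add. Qed.

Lemma powS_mul x m n : powS (powS x m) n = powS x (m + n * m.+1).
Proof.
elim: n => [|n IH]; first by rewrite mul0n addn0.
by rewrite powSS IH -powS_add; congr powS; nia.
Qed.

Lemma powS_idem x n : x ⋆ x = x -> powS x n = x.
Proof. by move=> ex; elim: n => [|n IH] //; rewrite powSS IH ex. Qed.

Lemma idem_pow_uniq x m n : powS x m ⋆ powS x m = powS x m ->
  powS x n ⋆ powS x n = powS x n -> powS x m = powS x n.
Proof.
move=> em en.
rewrite -(powS_idem n em) -(powS_idem m en) !powS_mul.
congr powS; nia.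
Qed.

Lemma pigeon x : exists i j, i < j <= #|T| /\ powS x i = powS x j.
Proof.
apply: NNPP => H.
have inj : injective (fun i : 'I_(#|T|.+1) => powS x i).
  move=> i j e; apply: NNPP => ne.
  have [lt|lt] : (i < j \/ j < i)%N.
    by case: (ltngtP i j) => [l|l|eij]; [left|right|exfalso; apply: ne; apply: val_inj].
  - by apply: H; exists i, j; rewrite lt /= -ltnS ltn_ord.
  - by apply: H; exists j, i; rewrite lt /= -ltnS ltn_ord.
by move: (leq_card _ inj); rewrite card_ord ltnn.
Qed.

Lemma omega_idem x : omega x ⋆ omega x = omega x.
Proof.
case: (pigeon x) => i [j [/andP [ij jn] eij]].
set n := #|T| in jn *.
set p := j - i.
have sh : forall m, i <= m -> powS x (m + p) = powS x m.
  move=> m im; have -> : m = i + (m - i) by rewrite subnKC.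
  elim: (m - i) => [|k IH]; first by rewrite addn0 /p (subnKC (ltnW ij)).
  by rewrite addnS [in LHS]addSn powSS IH.
have shc : forall c m, i <= m -> powS x (m + c * p) = powS x m.
  move=> c m im; elim: c => [|c IH]; first by rewrite addn0.
  by rewrite mulSn addnA addnAC sh ?IH // (leq_trans im) ?leq_addr.
have p0 : 0 < p by rewrite subn_gt0.
have pN : p %| n`! by apply: dvdn_fact; rewrite p0 /= /p (leq_trans (leq_subr _ _) jn).
have nN : n <= n`!.
  by apply: dvdn_leq; [exact: fact_gt0 | apply: dvdn_fact; rewrite leqnn andbT (leq_ltn_trans (leq0n i) (leq_trans ij jn))].
rewrite /omega -/n -powS_add.
have -> : ((n`!).-1 + (n`!).-1).+1 = (n`!).-1 + (n`! %/ p) * p.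
  by rewrite divnK //; have := fact_gt0 n; lia.
by rewrite shc //; have := fact_gt0 n; lia.
Qed.

Lemma omega_powS x : omega x = powS x (#|T|`!).-1.
Proof. by []. Qed.

Lemma omega_eq_pow x n : powS x n ⋆ powS x n = powS x n -> omega x = powS x n.
Proof. by move=> h; apply: idem_pow_uniq => //; exact: omega_idem. Qed.

Lemma omega_of_idem x : x ⋆ x = x -> omega x = x.
Proof. by move=> h; rewrite /omega powS_idem. Qed.

End Pow.

Lemma hom_powS (S T : finSemigroup) (f : S -> T) x n : hom f -> f (powS x n) = powS (f x) n.
Proof. by move=> hf; elim: n => [|n IH] //; rewrite !powSS hf IH. Qed.

Lemma hom_omega (S T : finSemigroup) (f : S -> T) x : hom f -> f (omega x) = omega (f x).
Proof.
move=> hf; rewrite [in LHS]/omega hom_powS //; symmetry; apply: omega_eq_pow.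
by rewrite -hom_powS // -hf omega_idem.
Qed.

Lemma phom_powS (S T : finSemigroup) (F : S -> option T) x a n :
  phom F -> F x = Some a -> F (powS x n) = Some (powS a n).
Proof. by move=> hF ex; elim: n => [|n IH] //; rewrite !powSS (hF _ _ _ _ IH ex). Qed.


Definition tc (Y : finType) (f g : {ffun Y -> Y}) : {ffun Y -> Y} := [ffun x => g (f x)].
Lemma tcA (Y : finType) : associative (@tc Y).
Proof. by move=> f g h; apply/ffunP => y; rewrite !ffunE. Qed.
Lemma FT_ne (Y : finType) : inhabited {ffun Y -> Y}.
Proof. by constructor; exact: [ffun y => y]. Qed.
Definition FT (Y : finType) : finSemigroup := FinSemigroup (@tcA Y) (FT_ne Y).
Definition cf (Y : finType) (y : Y) : {ffun Y -> Y} := [ffun _ => y].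
Lemma tc_cf (Y : finType) (f : {ffun Y -> Y}) y : tc f (cf y) = cf y.
Proof. by apply/ffunP => z; rewrite !ffunE. Qed.
Lemma cf_tc (Y : finType) (f : {ffun Y -> Y}) y : tc (cf y) f = cf (f y).
Proof. by apply/ffunP => z; rewrite !ffunE. Qed.

Section Induced.
Variables (B : finSemigroup) (Y : finType) (ev : B -> {ffun Y -> Y}).
Hypothesis hev : forall x y, ev (x ⋆ y) = tc (ev x) (ev y).
Variables (B' : finSemigroup) (Y' : finType) (ev' : B' -> {ffun Y' -> Y'}).
Hypothesis hev' : forall x y, ev' (x ⋆ y) = tc (ev' x) (ev' y).
Hypothesis inj' : injective ev'.
Variable pi : Y -> option Y'.
Hypothesis pis : forall y', exists y, pi y = Some y'.

Definition goodf (f : {ffun Y -> Y}) : bool :=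
  [forall y1, forall y2, ((pi y1 != None) && (pi y1 == pi y2)) ==>
      ((pi (f y1) != None) && (pi (f y1) == pi (f y2)))].

Definition ind (f : {ffun Y -> Y}) : {ffun Y' -> Y'} :=
  [ffun z => match [pick y | pi y == Some z] with Some y => odflt z (pi (f y)) | None => z end].

Lemma goodE (f : {ffun Y -> Y}) y1 y2 z : goodf f -> pi y1 = Some z -> pi y2 = Some z ->
  pi (f y1) != None /\ pi (f y1) = pi (f y2).
Proof.
move=> /forallP /(_ y1) /forallP /(_ y2) /implyP h e1 e2.
by move: h; rewrite e1 e2 eqxx /= => /(_ isT) /andP [? /eqP].
Qed.

Lemma indE (f : {ffun Y -> Y}) y z : goodf f -> pi y = Some z -> pi (f y) = Some (ind f z).
Proof.
move=> g e; rewrite ffunE; case: pickP => [y0 /eqP e0|/(_ y)]; last by rewrite e eqxx.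
case: (goodE g e0 e) => ne <-; by case: (pi (f y0)) ne.
Qed.

Lemma good_ind (f : {ffun Y -> Y}) (g : {ffun Y' -> Y'}) : (forall y z, pi y = Some z -> pi (f y) = Some (g z)) ->
  goodf f /\ ind f = g.
Proof.
move=> H.
have gf : goodf f.
  apply/forallP => y1; apply/forallP => y2; apply/implyP.
  case e1: (pi y1) => [z|] //= /eqP e2.
  by rewrite (H _ _ e1) (H _ _ (esym e2)) eqxx.
split => //; apply/ffunP => z; case: (pis z) => y e.
by move: (indE gf e); rewrite (H _ _ e) => -[].
Qed.

Lemma good_tc (f g : {ffun Y -> Y}) : goodf f -> goodf g -> goodf (tc f g) /\ ind (tc f g) = tc (ind f) (ind g).
Proof.
move=> gf gg; apply: good_ind => y z e.
rewrite ffunE [in RHS]ffunE; exact: indE gg (indE gf e).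
Qed.

Definition Find (b : B) : option B' :=
  if goodf (ev b) then [pick b' | ev' b' == ind (ev b)] else None.

Lemma induced_divides :
  (forall b', exists b, goodf (ev b) /\ ind (ev b) = ev' b') -> divides B' B.
Proof.
move=> H; exists Find; split.
  move=> x y a b; rewrite /Find.
  case gx: (goodf (ev x)) => //; case: pickP => // a' /eqP ea [<-].
  case gy: (goodf (ev y)) => //; case: pickP => // b' /eqP eb [<-].
  case: (good_tc gx gy) => gxy exy.
  rewrite hev gxy; case: pickP => [c /eqP ec|/(_ (a' ⋆ b'))].
    by congr Some; apply: inj'; rewrite ec hev' exy ea eb.
  by rewrite hev' exy ea eb eqxx.
move=> b'; case: (H b') => b [gb eb]; exists b; rewrite /Find gb.
case: pickP => [c /eqP ec|/(_ b')]; last by rewrite eb eqxx.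
by congr Some; apply: inj'; rewrite ec.
Qed.
End Induced.

Section Bar1.
Variable S : finSemigroup.
Definition oact (o : option S) (s : S) : S := match o with None => s | Some a => a ⋆ s end.
Definition r1 (s : S) : {ffun option S -> option S} := [ffun o => Some (oact o s)].
Definition P1 (f : {ffun option S -> option S}) : bool :=
  [exists s, f == r1 s] || [exists p, f == cf p].
Lemma oactA o s t : oact (Some (oact o s)) t = oact o (s ⋆ t).
Proof. by case: o => [a|] //=; rewrite fs_assoc. Qed.
Lemma r1_tc s t : tc (r1 s) (r1 t) = r1 (s ⋆ t).
Proof. by apply/ffunP => o; rewrite !ffunE oactA. Qed.
Lemma P1c f g : P1 f -> P1 g -> P1 (tc f g).
Proof.
case/orP=> [/existsP[s /eqP->]|/existsP[a /eqP->]];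
case/orP=> [/existsP[t /eqP->]|/existsP[b /eqP->]].
- by apply/orP; left; apply/existsP; exists (s ⋆ t); rewrite r1_tc.
- by apply/orP; right; apply/existsP; exists b; rewrite tc_cf.
- by apply/orP; right; apply/existsP; exists (r1 t a); rewrite cf_tc.
- by apply/orP; right; apply/existsP; exists b; rewrite tc_cf.
Qed.
Lemma P1ne : exists f, P1 f.
Proof. by exists (cf None); apply/orP; right; apply/existsP; exists None. Qed.
Definition Bar1 : finSemigroup := sub_sg (T := FT (option S)) P1c P1ne.
Lemma P1_r1 s : P1 (r1 s). Proof. by apply/orP; left; apply/existsP; exists s. Qed.
Lemma P1_cf p : P1 (cf p). Proof. by apply/orP; right; apply/existsP; exists p. Qed.
End Bar1.

Definition is_id (S : finSemigroup) (s : S) := forall x, s ⋆ x = x /\ x ⋆ s = x.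



Lemma idS_gen (S : finSemigroup) (b : bool) : b = is_monoid S ->
  exists i : Sdot_b S b,
    [/\ forall a, a = i \/ exists s, a = act_b i s,
        forall s s', act_b i s = act_b i s' -> s = s',
        forall s, act_b i s = i -> is_id s
      & forall s, is_id s -> act_b i s = i].
Proof.
case: b => hb.
- have: is_monoid S by rewrite -hb.
  case/existsP => e /forallP he.
  have ide : is_id e by move=> x; case/andP: (he x) => /eqP -> /eqP ->.
  exists e; split => /=.
  + by move=> a; right; exists a; rewrite (proj1 (ide a)).
  + by move=> s s'; rewrite (proj1 (ide s)) (proj1 (ide s')).
  + by move=> s; rewrite (proj1 (ide s)) => ->.
  + by move=> s ids; rewrite (proj1 (ide s)) -[RHS](proj2 (ids e)) (proj1 (ide s)).
- exists None; split => /=.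
  + by case=> [a|]; [right; exists a | left].
  + by move=> s s' [].
  + by [].
  + move=> s ids; exfalso; have: is_monoid S.
      apply/existsP; exists s; apply/forallP => x.
      by case: (ids x) => -> ->; rewrite !eqxx.
    by rewrite -hb.
Qed.

Lemma idS_ex (S : finSemigroup) :
  exists i : Sdot S,
    [/\ forall a, a = i \/ exists s, a = act i s,
        forall s s', act i s = act i s' -> s = s',
        forall s, act i s = i -> is_id s
      & forall s, is_id s -> act i s = i].
Proof. exact: (@idS_gen S (is_monoid S) erefl). Qed.

Lemma rmult_inj (S : finSemigroup) (s t : S) : rmult s = rmult t -> s = t.
Proof.
case: (idS_ex S) => i [_ inj _ _] e.
by apply: inj; move/ffunP: e => /(_ i); rewrite !ffunE.
Qed.

Lemma in_bar_rmult (S : finSemigroup) (s : S) : in_bar (rmult s).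
Proof. by apply/orP; left; apply/existsP; exists s. Qed.
Lemma in_bar_cst (S : finSemigroup) (a : Sdot S) : in_bar (cst a).
Proof. by apply/orP; right; apply/existsP; exists a. Qed.

Definition rmelt (S : finSemigroup) (s : S) : bar S := exist _ (rmult s) (in_bar_rmult s).
Definition cstelt (S : finSemigroup) (a : Sdot S) : bar S := exist _ (cst a) (in_bar_cst a).

Lemma rmelt_hom (S : finSemigroup) : hom (@rmelt S).
Proof. by move=> s t; apply: val_inj; apply/ffunP => a; rewrite /= !ffunE /act act_bA. Qed.
Lemma rmelt_inj (S : finSemigroup) : injective (@rmelt S).
Proof. by move=> s t [] /rmult_inj. Qed.

Lemma bar_val_mul (S : finSemigroup) (x y : bar S) : val (x ⋆ y) = tc (val x) (val y).
Proof. by []. Qed.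

Lemma bar_of_Bar1 (S : finSemigroup) : divides (bar S) (Bar1 S).
Proof.
case: (idS_ex S) => i [sur inj _ _].
pose iota := fun o : option S => match o with None => i | Some s => act i s end.
have compat : forall o s, iota (Some (oact o s)) = act (iota o) s.
  by case=> [a|] s //=; rewrite /act act_bA.
have pis : forall a, exists o, Some (iota o) = Some a.
  move=> a; case: (sur a) => [ea|[s ea]]; [exists None | exists (Some s)]; by rewrite ea.
apply: (@induced_divides (Bar1 S) _ (fun x => val x) _ (bar S) _ (fun x => val x) _ _
          (fun o => Some (iota o)) pis) => //; try exact: val_inj.
- move=> [f inf]; case/orP: (inf) => [/existsP [s /eqP ef]|/existsP [a /eqP ef]].
  + exists (exist _ (r1 s) (P1_r1 s)); apply: (good_ind pis) => /= o z [<-].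
    by rewrite ef !ffunE compat.
  + case: (sur a) => [ea|[s ea]].
      exists (exist _ (cf None) (P1_cf None)); apply: (good_ind pis) => /= o z [<-].
      by rewrite ef !ffunE ea.
    exists (exist _ (cf (Some s)) (P1_cf (Some s))); apply: (good_ind pis) => /= o z [<-].
    by rewrite ef !ffunE ea.
Qed.

Definition rz_mul (x y : bool) := y.
Lemma rz_mulA : associative rz_mul. Proof. by []. Qed.
Definition RZ2 : finSemigroup := FinSemigroup rz_mulA (inhabits true).

Definition trivc : sgClass := fun S => forall x y : S, x = y.
Lemma trivc_pv : pseudovariety trivc.
Proof.
split.
- move=> S T f hf sf tS x y; case: (sf x) => a <-; case: (sf y) => b <-; by rewrite (tS a b).
- by move=> S T f hf inf tS x y; apply: inf.
- by move=> [] [].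
- by move=> S T tS tT [a b] [c d]; rewrite (tS a c) (tT b d).
Qed.

Lemma pv_triv (V : sgClass) S : pseudovariety V -> trivc S -> V S.
Proof.
move=> pV tS; case: (pV) => _ Vs Vt _.
by apply: (Vs triv_sg S (fun _ => tt)) => // x y _; apply: tS.
Qed.

Lemma Bar1_triv S : trivc S -> divides (Bar1 S) RZ2.
Proof.
move=> tS; case: (fs_ne S) => s0.
pose F := fun b : RZ2 => (exist _ (cf (if b then Some s0 else None)) (P1_cf _) : Bar1 S).
exists (fun b => Some (F b)); split.
  move=> x y a b [<-] [<-]; congr Some; apply: val_inj.
  by rewrite /= tc_cf.
move=> [f Pf].
have [p ep] : exists p, f = cf p.
  case/orP: Pf => [/existsP [s /eqP ->]|/existsP [p /eqP ->]]; last by exists p.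
  by exists (Some s0); apply/ffunP => o; rewrite !ffunE (tS (oact o s) s0).
exists (if p is Some _ then true else false); congr Some; apply: val_inj.
by rewrite /= ep; case: p {ep} => [s|] //; rewrite (tS s s0).
Qed.

Lemma Bar1_quot (S T : finSemigroup) (phi : S -> T) :
  hom phi -> (forall y, exists x, phi x = y) -> divides (Bar1 T) (Bar1 S).
Proof.
move=> hphi sphi.
have pis : forall a : option T, exists o : option S, Some (omap phi o) = Some a.
  by case=> [a|]; [case: (sphi a) => s <-; exists (Some s) | exists None].
apply: (@induced_divides (Bar1 S) _ (fun x => val x) _ (Bar1 T) _ (fun x => val x) _ _
          (fun o => Some (omap phi o)) pis) => //; try exact: val_inj.
move=> [f Pf]; case/orP: (Pf) => [/existsP [t /eqP ef]|/existsP [a /eqP ef]].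
- case: (sphi t) => s es.
  exists (exist _ (r1 s) (P1_r1 s)); apply: (good_ind pis) => /= o z [<-].
  by rewrite ef !ffunE -es; case: o => [b|] //=; rewrite hphi.
- case: (pis a) => o [eo].
  exists (exist _ (cf o) (P1_cf o)); apply: (good_ind pis) => /= o' z [<-].
  by rewrite ef !ffunE eo.
Qed.

Definition pisub (S T : finSemigroup) (f : T -> S) (o : option S) : option (option T) :=
  match o with None => Some None | Some s => omap Some [pick t | f t == s] end.
Arguments pisub : simpl never.

Lemma Bar1_sub (S T : finSemigroup) (f : T -> S) :
  hom f -> injective f -> divides (Bar1 T) (Bar1 S).
Proof.
move=> hf inf.
pose pi := pisub f.
have piS : forall t, pi (Some (f t)) = Some (Some t).
  move=> t; rewrite /pi /pisub; case: pickP => [t' /eqP /inf -> //|/(_ t)]; by rewrite eqxx.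
have pis : forall a, exists o, pi o = Some a.
  by case=> [t|]; [exists (Some (f t)); exact: piS | exists None].
have piE : forall o z, pi o = Some z -> o = omap f z.
  rewrite /pi /pisub; case=> [s|] [z|] //=; case: pickP => // t /eqP <- [<-] //.
apply: (@induced_divides (Bar1 S) _ (fun x => val x) _ (Bar1 T) _ (fun x => val x) _ _
          pi pis) => //; try exact: val_inj.
move=> [g Pg]; case/orP: (Pg) => [/existsP [t /eqP eg]|/existsP [a /eqP eg]].
- exists (exist _ (r1 (f t)) (P1_r1 (f t))); apply: (good_ind pis) => /= o z /piE ->.
  by rewrite eg !ffunE; case: z => [b|] /=; rewrite -?hf piS.
- exists (exist _ (cf (omap f a)) (P1_cf (omap f a))); apply: (good_ind pis) => /= o z _.
  by rewrite eg !ffunE; case: a {eg} => [b|] //=; rewrite piS.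
Qed.

Lemma Bar1_prod (S T : finSemigroup) :
  divides (Bar1 (prod_sg S T)) (prod_sg (Bar1 S) (Bar1 T)).
Proof.
pose ev := fun x : prod_sg (Bar1 S) (Bar1 T) =>
  [ffun y : (option S * option T)%type => (val x.1 y.1, val x.2 y.2)].
pose pi := fun y : (option S * option T)%type => match y with
  | (None, None) => Some None
  | (Some a, Some b) => Some (Some ((a, b) : prod_sg S T))
  | _ => None end.
have pis : forall a, exists y, pi y = Some a.
  by case=> [[a b]|]; [exists (Some a, Some b) | exists (None, None)].
have piE : forall y z, pi y = Some z ->
    y = match z with None => (None, None) | Some (a, b) => (Some a, Some b) end.
  by case=> [[a|] [b|]] [[c d]|] //= [-> ->].
apply: (@induced_divides _ _ ev _ (Bar1 (prod_sg S T)) _ (fun x => val x) _ _ pi pis).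
- by move=> x y; apply/ffunP => z; rewrite !ffunE.
- by [].
- exact: val_inj.
move=> [g Pg]; case/orP: (Pg) => [/existsP [[s t] /eqP eg]|/existsP [a /eqP eg]].
- exists ((exist _ (r1 s) (P1_r1 s), exist _ (r1 t) (P1_r1 t)) : prod_sg (Bar1 S) (Bar1 T)).
  apply: (good_ind pis) => /= y z /piE ->.
  by rewrite eg !ffunE; case: z => [[a b]|] //=.
- pose a1 := omap (fun p : prod_sg S T => p.1) a.
  pose a2 := omap (fun p : prod_sg S T => p.2) a.
  exists ((exist _ (cf a1) (P1_cf a1), exist _ (cf a2) (P1_cf a2)) : prod_sg (Bar1 S) (Bar1 T)).
  apply: (good_ind pis) => /= y z _.
  by rewrite eg !ffunE /a1 /a2; case: a {eg a1 a2} => [[p q]|].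
Qed.

Lemma CX_pv (X : sgClass) : pseudovariety X -> X RZ2 ->
  pseudovariety (fun S => X (Bar1 S)).
Proof.
move=> pX XR; split.
- by move=> S T f hf sf XS; apply: (pv_div pX XS); apply: Bar1_quot hf sf.
- by move=> S T f hf inf XS; apply: (pv_div pX XS); apply: Bar1_sub hf inf.
- apply: (pv_div pX XR); apply: Bar1_triv; by case; case.
- move=> S T XS XT; apply: (pv_div pX _ (Bar1_prod S T)).
  by case: pX => _ _ _ Vp; apply: Vp.
Qed.

Definition fullconst (W : finSemigroup) : Prop :=
  exists (X : finType) (ev : W -> {ffun X -> X}),
    [/\ injective ev, forall x y, ev (x ⋆ y) = tc (ev x) (ev y) & forall a, exists w, ev w = cf a].

Section FunPow.
Variables (I : finType) (W : finSemigroup).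
Definition fp_mul (f g : {ffun I -> W}) : {ffun I -> W} := [ffun i => f i ⋆ g i].
Lemma fp_mulA : associative fp_mul.
Proof. by move=> f g h; apply/ffunP => i; rewrite !ffunE fs_assoc. Qed.
Lemma fp_ne : inhabited {ffun I -> W}.
Proof. by case: (fs_ne W) => w; constructor; exact: [ffun _ => w]. Qed.
Definition FunPow : finSemigroup := FinSemigroup fp_mulA fp_ne.
End FunPow.

Lemma FunPow_pv (V : sgClass) I W : pseudovariety V -> V W -> V (FunPow I W).
Proof.
move=> pV VW; apply: (sep_pv (phi := id)) => //; first by move=> s; exists s.
move=> f g ne.
have [i ni] : exists i, f i <> g i.
  by apply: NNPP => H; apply: ne; apply/ffunP => i; apply: NNPP => ni; apply: H; exists i.
exists W, (fun h : FunPow I W => h i); split => //.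
by move=> x y; rewrite /fs_mul /= ffunE.
Qed.

Section FC.
Variables (W : finSemigroup) (X : finType) (ev : W -> {ffun X -> X}).
Hypotheses (evi : injective ev) (evh : forall x y, ev (x ⋆ y) = tc (ev x) (ev y))
  (evc : forall a, exists w, ev w = cf a).
Variable w0 : W.
Definition cw (a : X) : W := odflt w0 [pick w | ev w == cf a].
Lemma cwE a : ev (cw a) = cf a.
Proof.
rewrite /cw; case: pickP => [w /eqP //|]; case: (evc a) => w ew /(_ w).
by rewrite ew eqxx.
Qed.
Lemma cw_inj : injective cw.
Proof. by move=> a b e; move: (cwE a); rewrite e cwE => /ffunP /(_ a); rewrite !ffunE. Qed.
Lemma cw_mulr a w : cw a ⋆ w = cw (ev w a).
Proof. by apply: evi; rewrite evh !cwE cf_tc. Qed.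
Lemma mul_cw a w : w ⋆ cw a = cw a.
Proof. by apply: evi; rewrite evh !cwE tc_cf. Qed.

Variables x1 x2 : X.
Hypothesis x12 : x1 != x2.

Definition enc (p : option W) : FunPow (option X) W :=
  [ffun i => match i with
   | None => cw (if p is None then x1 else x2)
   | Some x => cw (match p with None => x | Some w => ev w x end) end].

Lemma enc_inj : injective enc.
Proof.
move=> p q e.
have eN := congr1 (fun f : {ffun _ -> _} => f None) e; rewrite /= !ffunE in eN.
have eS : forall x, cw (match p with None => x | Some w => ev w x end) =
                    cw (match q with None => x | Some w => ev w x end).
  by move=> x; have := congr1 (fun f : {ffun _ -> _} => f (Some x)) e; rewrite /= !ffunE.
case: p q e eN eS => [a|] [b|] _ /cw_inj eN eS //.
- congr Some; apply: evi; apply/ffunP => x; exact: cw_inj (eS x).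
- by move: x12; rewrite eN eqxx.
- by move: x12; rewrite eN eqxx.
Qed.

Definition diagw (w : W) : FunPow (option X) W :=
  [ffun i => match i with None => cw x2 | Some _ => w end].

Lemma enc_diag p w : (enc p ⋆ diagw w : FunPow _ _) = enc (Some (oact p w)).
Proof.
apply/ffunP => i; rewrite /fs_mul /= !ffunE.
case: i => [x|]; first by rewrite cw_mulr; case: p => [a|] //=; rewrite evh ffunE.
by rewrite mul_cw.
Qed.

Lemma mul_enc (y : FunPow (option X) W) p : (y ⋆ enc p : FunPow _ _) = enc p.
Proof. by apply/ffunP => i; rewrite /fs_mul /= !ffunE; case: i => [x|]; rewrite mul_cw. Qed.

Lemma Bar1_FunPow : divides (Bar1 W) (FunPow (option X) W).
Proof.
pose evB := fun b : FunPow (option X) W => [ffun y : FunPow (option X) W => y ⋆ b].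
pose pi := fun y : FunPow (option X) W => [pick p | enc p == y].
have piE : forall p, pi (enc p) = Some p.
  move=> p; rewrite /pi; case: pickP => [q /eqP /enc_inj -> //|/(_ p)]; by rewrite eqxx.
have piS : forall y z, pi y = Some z -> y = enc z.
  by move=> y z; rewrite /pi; case: pickP => // q /eqP <- [<-].
have pis : forall a, exists y, pi y = Some a by move=> a; exists (enc a); exact: piE.
apply: (@induced_divides _ _ evB _ (Bar1 W) _ (fun x => val x) _ _ pi pis).
- by move=> x y; apply/ffunP => z; rewrite !ffunE fs_assoc.
- by [].
- exact: val_inj.
move=> [g Pg]; case/orP: (Pg) => [/existsP [w /eqP eg]|/existsP [a /eqP eg]].
- exists (diagw w); apply: (good_ind pis) => /= y z /piS ->.
  by rewrite eg !ffunE enc_diag piE.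
- exists (enc a); apply: (good_ind pis) => /= y z _.
  by rewrite eg !ffunE mul_enc piE.
Qed.

Lemma RZ2_div : divides RZ2 W.
Proof.
exists (fun w => if ev w == cf x1 then Some false else if ev w == cf x2 then Some true else None).
split.
  move=> x y a b _ /=; rewrite evh.
  case: (eqVneq (ev y) (cf x1)) => [e1|n1]; first by rewrite e1 tc_cf eqxx => -[<-].
  case: (eqVneq (ev y) (cf x2)) => [e2|n2]; last by move=> [].
  have n21 : cf x2 != cf x1 by rewrite -e2.
  by rewrite e2 tc_cf (negbTE n21) eqxx => -[<-].
case.
- exists (cw x2); rewrite cwE; case: eqP => [/ffunP /(_ x1)|]; last by rewrite eqxx.
  by rewrite !ffunE => e; move: x12; rewrite e eqxx.
- by exists (cw x1); rewrite cwE eqxx.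
Qed.
End FC.

Lemma fc_small (W : finSemigroup) (X : finType) (ev : W -> {ffun X -> X}) :
  injective ev -> (forall a b : X, a = b) -> trivc W.
Proof. by move=> evi h x y; apply: evi; apply/ffunP => a; apply: h. Qed.

Lemma bar_triv (S : finSemigroup) : trivc S -> trivc (bar S).
Proof.
move=> tS.
case: (idS_ex S) => i [sur _ _ idc].
have one : forall a : Sdot S, a = i.
  move=> a; case: (sur a) => [//|[s ->]]; apply: idc => x; split; apply: tS.
by move=> x y; apply: val_inj; apply/ffunP => a; rewrite (one (val x a)) (one (val y a)).
Qed.

Lemma BAR (X : sgClass) S : pseudovariety X ->
  gen (fun W => fullconst W /\ X W) S -> X (bar S).
Proof.
move=> pX GS.
case: (classic (X RZ2)) => [XR|nXR].
- have C : forall T, gen (fun W => fullconst W /\ X W) T -> X (Bar1 T).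
    apply: gen_min; first exact: CX_pv.
    move=> W [[Y [ev [evi evh evc]]] XW].
    case: (fs_ne W) => w0.
    case: (classic (exists x1 x2 : Y, x1 != x2)) => [[x1 [x2 x12]]|nd].
      apply: (pv_div pX _ (Bar1_FunPow evi evh evc w0 x12)).
      exact: FunPow_pv.
    apply: (pv_div pX XR); apply: Bar1_triv; apply: (fc_small evi) => a b.
    by apply: NNPP => ne; apply: nd; exists a, b; apply/eqP.
  exact: (pv_div pX (C _ GS) (bar_of_Bar1 S)).
- have: trivc S.
    apply: (gen_min trivc_pv) GS => W [[Y [ev [evi evh evc]]] XW].
    case: (fs_ne W) => w0.
    apply: (fc_small evi) => a b; apply: NNPP => ne; apply: nXR.
    have ab : a != b by apply/eqP.
    exact: (pv_div pX XW (RZ2_div evh evc w0 ab)).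
  by move=> tS; apply: pv_triv => //; apply: bar_triv.
Qed.

Lemma fullconst_bar (S : finSemigroup) : fullconst (bar S).
Proof.
exists (Sdot S), (fun x : bar S => val x); split.
- exact: val_inj.
- by [].
- by move=> a; exists (cstelt a).
Qed.

Section Min.
Variables (T : finSemigroup) (U : {set T}) (eps : T).
Hypotheses (UM : forall x y, x \in U -> y \in U -> x ⋆ y \in U) (epsU : eps \in U)
  (epsI : eps ⋆ eps = eps)
  (Hmin : forall w, w \in U -> exists x y, [/\ x \in U, y \in U & eps = x ⋆ w ⋆ y]).

Local Notation N1 := (#|T|`!).-1.

Lemma powU x n : x \in U -> powS x n \in U.
Proof. by move=> xU; elim: n => [|n IH] //; rewrite powSS UM. Qed.

Lemma eps_powl x n : eps ⋆ x = x -> eps ⋆ powS x n = powS x n.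
Proof. by move=> e; elim: n => [|n IH] //; rewrite powSS fs_assoc IH. Qed.

Lemma eps_powr x n : x ⋆ eps = x -> powS x n ⋆ eps = powS x n.
Proof. by move=> e; elim: n => [|n IH] //; rewrite powSl -fs_assoc IH. Qed.

Lemma omega_sq (x : T) : omega x = powS x (N1 + N1).+1.
Proof. by rewrite powS_add -omega_powS omega_idem. Qed.

Lemma K1 q : q \in U -> exists2 g, g \in U & eps = g ⋆ (eps ⋆ q ⋆ eps).
Proof.
move=> qU; set h := eps ⋆ q ⋆ eps.
have hU : h \in U by rewrite !UM.
have he : h ⋆ eps = h by rewrite /h -fs_assoc epsI.
case: (Hmin hU) => x [y [xU yU exy]].
set p := eps ⋆ x; set r := y ⋆ eps; set s := p ⋆ h.
have sr : s ⋆ r = eps.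
  rewrite /s /p /r; transitivity (eps ⋆ (x ⋆ h ⋆ y) ⋆ eps); first by rewrite !fs_assoc.
  by rewrite -exy !epsI.
have se : s ⋆ eps = s by rewrite /s -fs_assoc he.
have pw : forall n, powS s n ⋆ powS r n = eps.
  elim=> [|n IH] //; rewrite powSS powSl.
  by rewrite -fs_assoc (fs_assoc s) sr fs_assoc eps_powr.
set f := powS s N1; set R := powS r N1.
have ff : f ⋆ f = f by rewrite /f -omega_powS omega_idem.
have fe : f ⋆ eps = f by rewrite /f eps_powr.
have f1 : f = eps by rewrite -fe -(pw N1) -/f -/R fs_assoc ff.
exists (powS s (N1 + N1) ⋆ p).
  by rewrite UM ?powU ?UM.
by rewrite -fs_assoc -/s -powSS powS_add -/f f1 epsI.
Qed.

Lemma omega_eps k : k \in U -> eps ⋆ k = k -> k ⋆ eps = k -> omega k = eps.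
Proof.
move=> kU ek ke; set f := omega k.
have fU : f \in U by rewrite /f omega_powS powU.
have ff : f ⋆ f = f by exact: omega_idem.
have ef : eps ⋆ f = f by rewrite /f omega_powS eps_powl.
have fe : f ⋆ eps = f by rewrite /f omega_powS eps_powr.
case: (K1 fU) => g gU eg; rewrite ef fe in eg.
by rewrite -ef eg -fs_assoc ff -eg.
Qed.

Lemma pow_sandwich c m : eps ⋆ c = c -> powS c m.+1 = powS (c ⋆ eps) m ⋆ c.
Proof.
move=> ec; elim: m => [|m IH].
  by rewrite powSS /= -fs_assoc ec.
by rewrite powSS IH powSS -!fs_assoc ec.
Qed.

Lemma core a b y : a \in U -> y \in U -> eps ⋆ a = a -> eps ⋆ b = b ->
  b = y ⋆ a -> omega a = omega b.
Proof.
move=> aU yU ea eb bya.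
set k := a ⋆ eps; set h := eps ⋆ y ⋆ eps; set M := N1 + N1.
have kU : k \in U by rewrite UM.
have ek : eps ⋆ k = k by rewrite /k fs_assoc ea.
have ke : k ⋆ eps = k by rewrite /k -fs_assoc epsI.
have eh : eps ⋆ h = h by rewrite /h !fs_assoc epsI.
have he : h ⋆ eps = h by rewrite /h -fs_assoc epsI.
have hU : h \in U by rewrite !UM.
have bha : b = h ⋆ a by rewrite -eb bya -{1}ea /h !fs_assoc.
have bek : b ⋆ eps = h ⋆ k by rewrite bha /k -fs_assoc.
have hkU : h ⋆ k \in U by rewrite UM.
have ehk : eps ⋆ (h ⋆ k) = h ⋆ k by rewrite fs_assoc eh.
have hke : h ⋆ k ⋆ eps = h ⋆ k by rewrite -fs_assoc ke.
have om_hk := omega_eps hkU ehk hke.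
have om_k := omega_eps kU ek ke.
set m1 := powS (h ⋆ k) M ⋆ h.
have m1k : m1 ⋆ k = eps.
  by rewrite /m1 -fs_assoc -powSS /M powS_add -omega_powS om_hk epsI.
have kk : k ⋆ powS k M = eps.
  by rewrite -powSl /M powS_add -omega_powS om_k epsI.
have m1eps : m1 ⋆ eps = m1 by rewrite /m1 -fs_assoc he.
have m1e : m1 = powS k M.
  by rewrite -m1eps -kk fs_assoc m1k eps_powl.
rewrite !omega_sq -/M (pow_sandwich _ ea) (pow_sandwich _ eb) bek -/k.
by rewrite bha fs_assoc -/m1 m1e.
Qed.

Definition Lset (y : T) : {set T} := [set x ⋆ y | x in U].
Definition img (A : {set T}) (w : T) : {set T} := [set a ⋆ w | a in A].

Lemma img_Lset y w : img (Lset y) w = Lset (y ⋆ w).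
Proof.
apply/setP => z; apply/imsetP/imsetP.
  by case=> a /imsetP [x xU ->] ->; exists x => //; rewrite fs_assoc.
by case=> x xU ->; exists (x ⋆ y); [apply/imsetP; exists x | rewrite fs_assoc].
Qed.

Lemma img_img A w w' : img (img A w) w' = img A (w ⋆ w').
Proof.
apply/setP => z; apply/imsetP/imsetP.
  by case=> a /imsetP [x xA ->] ->; exists x => //; rewrite fs_assoc.
by case=> x xA ->; exists (x ⋆ w); [apply/imsetP; exists x | rewrite fs_assoc].
Qed.

Definition Xp (A : {set T}) : bool := [exists q in U, A == Lset (eps ⋆ q)].
Definition XT : finType := {A : {set T} | Xp A}.

Lemma Xp_img (A : XT) w : w \in U -> Xp (img (val A) w).
Proof.
move=> wU; case/existsP: (valP A) => q /andP [qU /eqP ->].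
by apply/existsP; exists (q ⋆ w); rewrite UM //= img_Lset fs_assoc eqxx.
Qed.

Definition rho (w : T) (A : XT) : XT := insubd A (img (val A) w).
Lemma val_rho w A : w \in U -> val (rho w A) = img (val A) w.
Proof. by move=> wU; rewrite val_insubd Xp_img. Qed.

Definition rhof (w : T) : {ffun XT -> XT} := [ffun A => rho w A].

Lemma rhof_tc w w' : w \in U -> w' \in U -> tc (rhof w) (rhof w') = rhof (w ⋆ w').
Proof.
move=> wU w'U; apply/ffunP => A; rewrite !ffunE; apply: val_inj.
by rewrite !val_rho ?UM // img_img.
Qed.

Definition PW (f : {ffun XT -> XT}) : bool := [exists w in U, f == rhof w].
Lemma PWc f g : PW f -> PW g -> PW (tc f g).
Proof.
case/existsP => w /andP [wU /eqP ->]; case/existsP => w' /andP [w'U /eqP ->].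
by apply/existsP; exists (w ⋆ w'); rewrite UM // rhof_tc // eqxx.
Qed.
Lemma PW_rhof w : w \in U -> PW (rhof w).
Proof. by move=> wU; apply/existsP; exists w; rewrite wU eqxx. Qed.
Lemma PWne : exists f, PW f.
Proof. by exists (rhof eps); exact: PW_rhof. Qed.

Definition Wsg : finSemigroup := sub_sg (T := FT XT) PWc PWne.
Definition wel (t : T) : Wsg := insubd (exist _ (rhof eps) (PW_rhof epsU)) (rhof t).
Lemma val_wel t : t \in U -> val (wel t) = rhof t.
Proof. by move=> tU; rewrite val_insubd PW_rhof. Qed.

Lemma wel_mul x y : x \in U -> y \in U -> wel (x ⋆ y) = wel x ⋆ wel y.
Proof.
by move=> xU yU; apply: val_inj; rewrite /= !val_wel ?UM // rhof_tc.
Qed.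

Lemma Lset_const q q' : q \in U -> q' \in U -> Lset (eps ⋆ q' ⋆ (eps ⋆ q)) = Lset (eps ⋆ q).
Proof.
move=> qU q'U; case: (K1 q'U) => g gU eg.
apply/setP => z; apply/imsetP/imsetP.
  case=> x xU ->; exists (x ⋆ (eps ⋆ q')); first by rewrite !UM.
  by rewrite !fs_assoc.
case=> x xU ->; exists (x ⋆ g); first by rewrite UM.
by rewrite {1}eg !fs_assoc.
Qed.

Lemma Wsg_fullconst : fullconst Wsg.
Proof.
exists XT, (fun x : Wsg => val x); split.
- exact: val_inj.
- by [].
- move=> A; case/existsP: (valP A) => q /andP [qU /eqP eA].
  have eqU : eps ⋆ q \in U by rewrite UM.
  exists (wel (eps ⋆ q)); rewrite val_wel //; apply/ffunP => B; rewrite !ffunE.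
  apply: val_inj; rewrite val_rho // eA.
  case/existsP: (valP B) => q' /andP [q'U /eqP ->].
  by rewrite img_Lset Lset_const.
Qed.

Lemma Wsg_div : divides Wsg T.
Proof.
exists (fun t => if t \in U then Some (wel t) else None); split.
  move=> x y a b; case xU: (x \in U) => // -[<-]; case yU: (y \in U) => // -[<-].
  by rewrite UM // wel_mul.
move=> [f Pf]; case/existsP: (Pf) => w /andP [wU /eqP ef].
exists w; rewrite wU; congr Some; apply: val_inj; by rewrite val_wel.
Qed.

Lemma wel_sep q w w' : q \in U -> w \in U -> w' \in U -> wel w = wel w' ->
  omega (eps ⋆ q ⋆ w) = omega (eps ⋆ q ⋆ w').
Proof.
move=> qU wU w'U e.
have eqU : eps ⋆ q \in U by rewrite UM.
have XA : Xp (Lset (eps ⋆ q)) by apply/existsP; exists q; rewrite qU eqxx.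
pose A : XT := exist (fun A => Xp A) (Lset (eps ⋆ q)) XA.
have : val (rho w A) = val (rho w' A).
  by rewrite -!(ffunE (fun A => rho _ A)) -/(rhof w) -/(rhof w') -!val_wel // e.
rewrite !val_rho //= !img_Lset => eL.
set a := eps ⋆ q ⋆ w; set b := eps ⋆ q ⋆ w'.
have ea : eps ⋆ a = a by rewrite /a !fs_assoc epsI.
have eb : eps ⋆ b = b by rewrite /b !fs_assoc epsI.
have : b \in Lset a by rewrite eL -{1}eb; apply/imsetP; exists eps.
case/imsetP => y yU bya.
apply: (core (y := y)) => //; by rewrite /a !UM.
Qed.
End Min.

Definition pb (P : Prop) : bool := if excluded_middle_informative P then true else false.
Lemma pbP P : reflect P (pb P).
Proof. by rewrite /pb; case: excluded_middle_informative => h; constructor. Qed.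

Lemma sat_pv (A : finType) (p q : rawop A) : natural p -> natural q -> pseudovariety (sat p q).
Proof.
move=> np nq; split.
- move=> S T f hf sf sS g.
  case: (fs_ne S) => s0.
  pose g' := fun a => odflt s0 [pick x | f x == g a].
  have fg : (fun a => f (g' a)) = g.
    apply: functional_extensionality => a; rewrite /g'.
    case: pickP => [x /eqP //|]; case: (sf (g a)) => x ex /(_ x); by rewrite ex eqxx.
  by rewrite -fg -np // -nq // sS.
- move=> S T f hf inf sS g; apply: inf; by rewrite np // nq // sS.
- by move=> g; case: (p _ g); case: (q _ g).
- move=> S T sS sT g.
  have h1 : hom (fun x : prod_sg S T => x.1) by [].
  have h2 : hom (fun x : prod_sg S T => x.2) by [].
  have E1 : (p _ g).1 = (q _ g).1.
    move: (np _ _ _ h1 g) (nq _ _ _ h1 g) => /= e1 e2; rewrite e1 e2; exact: sS.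
  have E2 : (p _ g).2 = (q _ g).2.
    move: (np _ _ _ h2 g) (nq _ _ _ h2 g) => /= e1 e2; rewrite e1 e2; exact: sT.
  by move: E1 E2; case: (p _ g) => ? ?; case: (q _ g) => ? ? /= -> ->.
Qed.

Lemma ezu_nat (A : finType) (e : implop (option A)) (u : implop A) : natural (ezu_omega e u).
Proof.
move=> T T' phi hphi f; rewrite /ezu_omega hom_omega // !hphi.
by rewrite (io_nat e hphi) (io_nat u hphi).
Qed.

Section Implop.
Variable B : finType.
Lemma imul_nat (x y : implop B) : natural (rmul (io x) (io y)).
Proof. by move=> T T' phi hphi f; rewrite /rmul hphi (io_nat x hphi) (io_nat y hphi). Qed.
Definition imul (x y : implop B) : implop B := ImplOp (imul_nat x y).
Lemma iproj_nat (b : B) : natural (fun T (f : B -> T) => f b).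
Proof. by []. Qed.
Definition iproj (b : B) : implop B := ImplOp (iproj_nat b).
End Implop.

Lemma pv_of_self S : pv_of S S.
Proof. by apply: gen_in; exact: iso_refl. Qed.

Lemma pv_of_div T W : divides W T -> pv_of T W.
Proof. move=> d; apply: (pv_div _ _ d); [exact: gen_pv | exact: pv_of_self]. Qed.

Lemma part3 (S : finSemigroup) (A : finType) (u v : implop A) (e : implop (option A)) :
  (forall T, Excl S T <-> sat (io u) (io v) T) ->
  idem_implop e -> in_minimal_ideal e ->
  forall T, Excl (bar S) T <-> sat (ezu_omega e u) (ezu_omega e v) T.
Proof.
move=> hE ide mine T.
have nsS : ~ sat (io u) (io v) S by move/hE; apply; exact: pv_of_self.
split.
-
  move=> exT; apply: NNPP => nsat.
  have [F nF] : exists F, @ezu_omega A e u T F <> @ezu_omega A e v T F.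
    by apply: NNPP => H; apply: nsat => F; apply: NNPP => nF; apply: H; exists F.
  pose U : {set T} := [set x | pb (exists w : implop (option A), io w T F = x)].
  have inU : forall w : implop (option A), io w T F \in U.
    by move=> w; rewrite inE; apply/pbP; exists w.
  have UE : forall x, x \in U -> exists w : implop (option A), io w T F = x.
    by move=> x; rewrite inE => /pbP.
  have UM : forall x y, x \in U -> y \in U -> x ⋆ y \in U.
    move=> x y /UE [w <-] /UE [w' <-]; exact: (inU (imul w w')).
  set eps := io e T F.
  have epsU : eps \in U by exact: inU.
  have epsI : eps ⋆ eps = eps by exact: ide.
  have Hmin : forall w, w \in U -> exists x y, [/\ x \in U, y \in U & eps = x ⋆ w ⋆ y].
    move=> w /UE [w' <-]; case: (mine w') => ox [oy eo].
    have eo' : eps = omul_r (omul_l ox (io w')) oy F := eo T F.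
    exists (if ox is Some x0 then eps ⋆ io x0 T F else eps),
           (if oy is Some y0 then io y0 T F ⋆ eps else eps).
    split; first by case: ox {eo eo'} => [x0|] //; rewrite UM ?inU.
      by case: oy {eo eo'} => [y0|] //; rewrite UM ?inU.
    transitivity (eps ⋆ eps ⋆ eps); first by rewrite !epsI.
    rewrite {2}eo'; case: ox {eo eo'} => [x0|]; case: oy => [y0|];
      by rewrite /omul_r /omul_l /rmul ?fs_assoc.
  have Pne : exists x, (fun x => x \in U) x by exists eps.
  pose Z := sub_sg (T := T) (P := fun x => x \in U) UM Pne.
  pose W := Wsg UM epsU.
  have fcW : fullconst W by exact: Wsg_fullconst.
  have dW : divides W T by exact: Wsg_div.
  pose f' := fun a => (exist _ (F (Some a)) (inU (iproj (Some a))) : Z).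
  have hval : hom (fun z : Z => val z) by [].
  have hwel : hom (fun z : Z => wel UM epsU (val z)).
    by move=> x y; rewrite /= wel_mul //; [exact: valP | exact: valP].
  have natW : forall w : implop A,
      io w W (fun a => wel UM epsU (F (Some a))) = wel UM epsU (io w T (fun a => F (Some a))).
    move=> w.
    have e1 := io_nat w hval f'.
    have e2 := io_nat w hwel f'.
    by rewrite /= in e1 e2; rewrite -e2 e1.
  have nsW : ~ sat (io u) (io v) W.
    move=> sW; apply: nF.
    have := sW (fun a => wel UM epsU (F (Some a))); rewrite !natW => ew.
    rewrite /ezu_omega -/eps.
    apply: (@wel_sep T U eps UM epsU epsI Hmin _ _ _ _ _ _ ew).
    + exact: (inU (iproj None)).
    + exact: (inU (ImplOp (fun T' T'' phi hphi f => io_nat u hphi (fun a => f (Some a))))).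
    + exact: (inU (ImplOp (fun T' T'' phi hphi f => io_nat v hphi (fun a => f (Some a))))).
  have pWS : pv_of W S by apply: NNPP => h; apply: nsW; apply/hE.
  apply: exT; apply: (BAR (gen_pv _)).
  apply: (gen_min (gen_pv _)) pWS => S' isoS.
  apply: (pv_iso (gen_pv _) _ isoS); apply: gen_in; split => //.
  exact: pv_of_div.
-
  move=> sT pT.
  have sB : sat (ezu_omega e u) (ezu_omega e v) (bar S).
    apply: (gen_min (sat_pv (ezu_nat e u) (ezu_nat e v))) pT => T' iT.
    exact: (pv_iso (sat_pv (ezu_nat e u) (ezu_nat e v)) sT iT).
  have [f nf] : exists f, io u S f <> io v S f.
    by apply: NNPP => H; apply: nsS => f; apply: NNPP => nf; apply: H; exists f.
  case: (idS_ex S) => i [_ inj _ _].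
  pose F := fun o : option A => match o with None => cstelt i | Some a => rmelt (f a) end.
  have := sB F; rewrite /ezu_omega /=.
  rewrite -(io_nat u (@rmelt_hom S)) -(io_nat v (@rmelt_hom S)).
  have key : forall (x : bar S) s, omega (x ⋆ cstelt i ⋆ rmelt s) = cstelt (act i s).
    move=> x s; rewrite omega_of_idem.
      by apply: val_inj; apply/ffunP => a; rewrite /= !ffunE.
    by apply: val_inj; apply/ffunP => a; rewrite /= !ffunE.
  rewrite !key => -[] /ffunP /(_ i); rewrite !ffunE => /inj.
  exact: nf.
Qed.

Section PL.
Variable T : finSemigroup.
Fixpoint pl (x : T) (l : seq T) : T := match l with [::] => x | y :: l' => x ⋆ pl y l' end.
Definition lft' (ox : option T) (w : T) := match ox with Some x => x ⋆ w | None => w end.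
Definition rgt' (w : T) (oy : option T) := match oy with Some y => w ⋆ y | None => w end.
Definition lft (X : T) (ox : option T) := match ox with Some x => X ⋆ x | None => X end.
Definition rgt (oy : option T) (Y : T) := match oy with Some y => y ⋆ Y | None => Y end.

Lemma factor3 X Y w ox oy : X ⋆ rgt' (lft' ox w) oy ⋆ Y = lft X ox ⋆ w ⋆ rgt oy Y.
Proof. by case: ox => [x|]; case: oy => [y|]; rewrite /= ?fs_assoc. Qed.

Variable U : {set T}.
Hypothesis UM : forall x y, x \in U -> y \in U -> x ⋆ y \in U.

Lemma pl_in x l : x \in U -> all (fun y => y \in U) l -> pl x l \in U.
Proof.
elim: l x => [|y l IH] x //= xU /andP [yU lU]; by rewrite UM // IH.
Qed.

Lemma pl_factor x l w : x \in U -> all (fun y => y \in U) l -> w \in x :: l ->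
  exists ox oy, [/\ (forall a, ox = Some a -> a \in U), (forall a, oy = Some a -> a \in U)
     & pl x l = rgt' (lft' ox w) oy].
Proof.
elim: l x => [|y l IH] x xU.
  by move=> _; rewrite inE => /eqP ->; exists None, None.
move=> /= /andP [yU lU]; rewrite inE => /orP [/eqP ->|wl].
  by exists None, (Some (pl y l)); split => // a [<-]; rewrite pl_in.
case: (IH y yU lU wl) => ox [oy [hx hy e]].
exists (Some (lft x ox)), oy; split => //.
  by move=> a [<-]; case: ox hx {e} => [x'|] //= hx; rewrite UM // hx.
rewrite e; case: ox {hx e} => [x'|]; case: oy {hy} => [y'|]; by rewrite /= ?fs_assoc.
Qed.
End PL.

Lemma jirr_eqv (V1 V2 : sgClass) : (forall T, V1 T <-> V2 T) ->
  join_irreducible V1 -> join_irreducible V2.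
Proof.
move=> eqv j XX hXX sub; case: (j XX hXX) => [S /eqv /sub //|X XXX sX].
by exists X => // S /eqv /sX.
Qed.

Lemma part1 (V : sgClass) : pseudovariety V -> join_irreducible V ->
  join_irreducible (bar_pv V).
Proof.
move=> pV jV XX hXX Hsub.
pose Xp := fun X : sgClass => gen (fun W => fullconst W /\ X W).
pose XX' := fun Y : sgClass => exists2 X, XX X & Y = Xp X.
have hXX' : forall Y, XX' Y -> pseudovariety Y by move=> Y [X _ ->]; exact: gen_pv.
suff crux : subclass V (join XX').
  case: (jV XX' hXX' crux) => Y [X XXX ->] VY.
  exists X => //.
  apply: (gen_min (hXX X XXX)) => T [S VS iS].
  apply: (pv_iso (hXX X XXX) _ iS); apply: (BAR (hXX X XXX)); exact: VY.
move=> S VS.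
have bS : join XX (bar S) by apply: Hsub; apply: gen_in; exists S => //; exact: iso_refl.
case: (gen_DK bS) => P hP [Phi [hPhi sPhi]].
pose Z : {set P} := [set z | Phi z != None].
have ZM : forall x y, x \in Z -> y \in Z -> x ⋆ y \in Z.
  move=> x y; rewrite !inE; case ex: (Phi x) => [a|] // _; case ey: (Phi y) => [b|] // _.
  by rewrite (hPhi _ _ _ _ ex ey).
have inZ : forall z a, Phi z = Some a -> z \in Z by move=> z a e; rewrite inE e.
case: (fs_ne (bar S)) => b0; case: (sPhi b0) => zh ezh.
have zhZ : zh \in Z := inZ _ _ ezh.
set z0 := pl zh (enum Z).
have allZ : all (fun y => y \in Z) (enum Z) by apply/allP => y; rewrite mem_enum.
have z0Z : z0 \in Z by exact: pl_in.
set eps := omega z0.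
have epsZ : eps \in Z by rewrite /eps omega_powS powU.
have epsI : eps ⋆ eps = eps by exact: omega_idem.
have Hmin : forall w, w \in Z -> exists x y, [/\ x \in Z, y \in Z & eps = x ⋆ w ⋆ y].
  move=> w wZ.
  have [Y [YZ eY]] : exists Y, Y \in Z /\ eps = eps ⋆ z0 ⋆ Y.
    have : eps = eps ⋆ powS z0 (#|P|`!).-1 ⋆ eps by rewrite -omega_powS -/eps !epsI.
    case: (#|P|`!).-1 => [|k] e3; first by exists eps.
    exists (powS z0 k ⋆ eps); split; first by rewrite ZM // powU.
    by rewrite {1}e3 powSl !fs_assoc.
  have wl : w \in zh :: enum Z by rewrite inE mem_enum wZ orbT.
  case: (pl_factor ZM zhZ allZ wl) => ox [oy [hx hy ez]].
  exists (lft eps ox), (rgt oy Y); split.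
  - by case: ox hx {ez} => [x|] //= hx; rewrite ZM // hx.
  - by case: oy hy {ez} => [y|] //= hy; rewrite ZM // hy.
  by rewrite -factor3 -ez.
pose dp := fun z : P => [exists s, Phi z == Some (rmelt s)].
have DM : forall x y, dp x -> dp y -> dp (x ⋆ y).
  move=> x y /existsP [s /eqP es] /existsP [t /eqP et]; apply/existsP; exists (s ⋆ t).
  by rewrite (hPhi _ _ _ _ es et) rmelt_hom.
case: (fs_ne S) => s0.
have Dne : exists z, dp z by case: (sPhi (rmelt s0)) => z ez; exists z; apply/existsP; exists s0; rewrite ez.
pose D := sub_sg DM Dne.
pose phi := fun d : D => odflt s0 [pick s | Phi (val d) == Some (rmelt s)].
have phiE : forall d : D, Phi (val d) = Some (rmelt (phi d)).
  move=> d; rewrite /phi; case: pickP => [s /eqP //|].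
  by case/existsP: (valP d) => s es /(_ s); rewrite es.
have Dsub : forall d : D, val d \in Z by move=> d; apply: (inZ _ _ (phiE d)).
apply: (sep_pv (gen_pv _) (phi := phi)).
- move=> d d'; apply: rmelt_inj; have := phiE (d ⋆ d').
  by rewrite /= (hPhi _ _ _ _ (phiE d) (phiE d')) -(@rmelt_hom S (phi d) (phi d')) => /Some_inj ->.
- move=> s; case: (sPhi (rmelt s)) => z ez.
  have dz : dp z by apply/existsP; exists s; rewrite ez.
  pose dz' : D := exist (fun x => dp x) z dz.
  exists dz'; apply: rmelt_inj; have := phiE dz'; by rewrite /= ez => /Some_inj ->.
move=> d d' nd.
case: (idS_ex S) => i [_ inj _ _].
case: (sPhi (cstelt i)) => q eq.
have qZ : q \in Z := inZ _ _ eq.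
have [c0 ec0] : exists c0, Phi eps = Some c0.
  by move: epsZ; rewrite inE; case: (Phi eps) => [c|] //; exists c.
have val_om : forall x : D, Phi (omega (eps ⋆ q ⋆ val x)) = Some (cstelt (act i (phi x))).
  move=> x.
  have e1 : Phi (eps ⋆ q ⋆ val x) = Some (cstelt (act i (phi x))).
    rewrite (hPhi _ _ _ _ (hPhi _ _ _ _ ec0 eq) (phiE x)); congr Some.
    by apply: val_inj; apply/ffunP => a; rewrite /= !ffunE.
  rewrite omega_powS (phom_powS _ hPhi e1) powS_idem //.
  by apply: val_inj; apply/ffunP => a; rewrite /= !ffunE.
have nom : omega (eps ⋆ q ⋆ val d) <> omega (eps ⋆ q ⋆ val d').
  move=> E; have := val_om d; rewrite E val_om => /Some_inj /(congr1 (fun c : bar S => val c i)).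
  by rewrite /= !ffunE => /inj /esym.
case: (ProdK_sep hP nom) => Tk [h [hh [X XXX XTk] nh]].
rewrite !hom_omega // !hh in nh.
pose Uh : {set Tk} := [set h z | z in Z].
have inUh : forall z, z \in Z -> h z \in Uh by move=> z zZ; apply/imsetP; exists z.
have UMh : forall x y, x \in Uh -> y \in Uh -> x ⋆ y \in Uh.
  move=> x y /imsetP [a aZ ->] /imsetP [b bZ ->]; rewrite -hh; apply: inUh; exact: ZM.
have epsUh : h eps \in Uh := inUh _ epsZ.
have epsIh : h eps ⋆ h eps = h eps by rewrite -hh epsI.
have Hminh : forall w, w \in Uh -> exists x y, [/\ x \in Uh, y \in Uh & h eps = x ⋆ w ⋆ y].
  move=> w /imsetP [z zZ ->]; case: (Hmin _ zZ) => x [y [xZ yZ e]].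
  by exists (h x), (h y); rewrite !inUh // e !hh.
pose W := Wsg UMh epsUh.
exists W, (fun x : D => wel UMh epsUh (h (val x))); split.
- move=> x y; rewrite /= hh wel_mul //; apply: inUh; exact: Dsub.
- apply: gen_in; exists (Xp X); first by exists X.
  apply: gen_in; split; first exact: Wsg_fullconst.
  apply: (pv_div (hXX X XXX) XTk); exact: Wsg_div.
- move=> ew; apply: nh.
  exact: (@wel_sep Tk Uh (h eps) UMh epsUh epsIh Hminh _ _ _ (inUh _ qZ) (inUh _ (Dsub d)) (inUh _ (Dsub d')) ew).
Qed.

Lemma part2 (S : finSemigroup) : join_irreducible (pv_of S) -> join_irreducible (pv_of (bar S)).
Proof.
move=> jS; apply: (jirr_eqv _ (part1 (gen_pv _) jS)) => T; split.
- apply: (gen_min (gen_pv _)) => T' [S' pS' iS'].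
  apply: (pv_iso (gen_pv _) _ iS'); apply: (BAR (gen_pv _)).
  apply: (gen_min (gen_pv _)) pS' => S'' iS''.
  apply: (pv_iso (gen_pv _) _ iS'').
  have Gb : gen (fun W => fullconst W /\ pv_of (bar S) W) (bar S).
    by apply: gen_in; split; [exact: fullconst_bar | exact: pv_of_self].
  case: (gen_pv (fun W => fullconst W /\ pv_of (bar S) W)) => _ Vs _ _.
  exact: (Vs _ _ _ (@rmelt_hom S) (@rmelt_inj S) Gb).
- apply: (gen_min (gen_pv _)) => T' iT'.
  by apply: gen_in; exists S => //; exact: pv_of_self.
Qed.

Theorem theorem4p3 :
  (forall V : sgClass, pseudovariety V -> join_irreducible V ->
     join_irreducible (bar_pv V)) /\
  (forall S : finSemigroup, join_irreducible (pv_of S) ->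
     join_irreducible (pv_of (bar S))) /\
  (forall (S : finSemigroup) (A : finType) (u v : implop A)
          (e : implop (option A)),
     (forall T, Excl S T <-> sat (io u) (io v) T) ->
     idem_implop e -> in_minimal_ideal e ->
     forall T, Excl (bar S) T <-> sat (ezu_omega e u) (ezu_omega e v) T).
Proof.
split; first exact: part1.
split; first exact: part2.
exact: part3.
Qed.
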